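(* Let $\mathcal{F}$ be a finite family of pairwise intersecting compact convex sets in the plane with the $(4,3)$ property, i.e., among any four distinct members some three have a common point. For $D\in\mathcal{F}$, let $G_D$ be the directed graph on vertex set $\mathcal{F}\setminus\{D\}$ with an arc from $A$ to $B$ if and only if $o(ABD)=1$. Then $G_D$ contains no directed cycle of length 4.
   Context: For three pairwise intersecting compact convex sets $X,Y,Z$ in the plane: $o(XYZ)=0$ if $X\cap Y\cap Z\neq\emptyset$; otherwise $o(XYZ)=o(xyz)$ for any $x\in Y\cap Z$, $y\in X\cap Z$, $z\in X\cap Y$, where for points $o(xyz)=+1$ for a counterclockwise and $-1$ for a clockwise triangle (independent of the choice). *)

(* Defs.v *)
From HB Require Import structures.
From mathcomp Require Import all_boot all_order all_algebra.
From mathcomp Require Import all_classical all_reals topology normedtype.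
From mathcomp Require Import Rstruct Rstruct_topology.
From Stdlib Require Import Reals.
Set Implicit Arguments. Unset Strict Implicit. Unset Printing Implicit Defensive.
Import Order.TTheory GRing.Theory Num.Theory.
Local Open Scope classical_set_scope.
Local Open Scope ring_scope.

Definition pt := (Rdefinitions.R * Rdefinitions.R)%type.

Definition convex_set (A : set pt) : Prop :=
  forall x y : pt, A x -> A y -> forall t : Rdefinitions.R, 0 <= t -> t <= 1 ->
    A (t * x.1 + (1 - t) * y.1, t * x.2 + (1 - t) * y.2).

(* Signed area (twice) of the triangle xyz; > 0 iff counterclockwise. *)
Definition orient_det (x y z : pt) : Rdefinitions.R :=
  (y.1 - x.1) * (z.2 - x.2) - (y.2 - x.2) * (z.1 - x.1).

Definition ccw (x y z : pt) : Prop := 0 < orient_det x y z.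

(* o(XYZ) = +1 : X,Y,Z have no common point and for points
   x in Y∩Z, y in X∩Z, z in X∩Y the triangle xyz is counterclockwise
   (the paper notes this is independent of the choice of x,y,z). *)
Definition o_pos (X Y Z : set pt) : Prop :=
  X `&` Y `&` Z = set0 /\
  exists x y z : pt, (Y `&` Z) x /\ (X `&` Z) y /\ (X `&` Y) z /\ ccw x y z.

(* Main.v *)
Require Import Defs.
From HB Require Import structures.
From mathcomp Require Import all_boot all_order all_algebra.
From mathcomp Require Import all_classical all_reals topology normedtype.
From mathcomp Require Import Rstruct Rstruct_topology.
From mathcomp Require Import ring lra.
Import Order.TTheory GRing.Theory Num.Theory.
Local Open Scope classical_set_scope.
Local Open Scope ring_scope.
Notation R := Rdefinitions.R.

Lemma conv_mem (A : set pt) (x y : pt) (t : R) (P : pt) :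
  convex_set A -> A x -> A y -> 0 <= t -> t <= 1 ->
  P.1 = t * x.1 + (1 - t) * y.1 -> P.2 = t * x.2 + (1 - t) * y.2 -> A P.
Proof.
move=> hA hx hy t0 t1; case: P => p1 p2 /= -> ->; exact: hA.
Qed.

Lemma collinear_mem (X Y Z : set pt) (x y z : pt) :
  convex_set X -> convex_set Y -> convex_set Z ->
  Y x -> Z x -> X y -> Z y -> X z -> Y z ->
  orient_det x y z = 0 -> exists w, X w /\ Y w /\ Z w.
Proof.
move=> cX cY cZ Yx Zx Xy Zy Xz Yz.
case: x Yx Zx => x1 x2 Yx Zx; case: y Xy Zy => y1 y2 Xy Zy;
case: z Xz Yz => z1 z2 Xz Yz.
rewrite /orient_det /= !RminusE !RmultE => hdet.
pose d1 := z1 - y1; pose d2 := z2 - y2.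
pose n := d1 ^+ 2 + d2 ^+ 2.
have [n0|nn0] := eqVneq n 0.
  have h1 : d1 = 0 by rewrite /n in n0; nra.
  have h2 : d2 = 0 by rewrite /n in n0; nra.
  have ez : (z1, z2) = (y1, y2) by rewrite /d1 /d2 in h1 h2; congr pair; lra.
  by rewrite ez in Yz; exists (y1, y2).
pose lam := ((x1 - y1) * d1 + (x2 - y2) * d2) / n.
have e1 : (x1 - (y1 + lam * d1)) * n =
   - d2 * ((y1 - x1) * (z2 - x2) - (y2 - x2) * (z1 - x1)).
  by rewrite /lam /n /d1 /d2; field; rewrite -/d1 -/d2 -/n.
have e2 : (x2 - (y2 + lam * d2)) * n =
   d1 * ((y1 - x1) * (z2 - x2) - (y2 - x2) * (z1 - x1)).
  by rewrite /lam /n /d1 /d2; field; rewrite -/d1 -/d2 -/n.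
rewrite hdet mulr0 in e1; rewrite hdet mulr0 in e2.
move: e1 => /eqP; rewrite mulf_eq0 (negbTE nn0) orbF subr_eq0 => /eqP hx1.
move: e2 => /eqP; rewrite mulf_eq0 (negbTE nn0) orbF subr_eq0 => /eqP hx2.
have [l0|l0] := lerP 0 lam; last first.
  (* y between x and z *)
  exists (y1, y2); split => //; split => //.
  apply: (@conv_mem _ (x1, x2) (z1, z2) (1 / (1 - lam))) => //=.
  - apply: divr_ge0; lra.
  - rewrite ler_pdivrMr; lra.
  - rewrite hx1 /d1; field; lra.
  - rewrite hx2 /d2; field; lra.
have [l1|l1] := lerP lam 1.
  exists (x1, x2); split => //.
  apply: (@conv_mem _ (z1, z2) (y1, y2) lam) => //=.
  - rewrite hx1 /d1; ring.
  - rewrite hx2 /d2; ring.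
exists (z1, z2); split => //; split => //.
apply: (@conv_mem _ (x1, x2) (y1, y2) (1 / lam)) => //=.
- apply: divr_ge0; lra.
- rewrite ler_pdivrMr; lra.
- rewrite hx1 /d1; field; lra.
- rewrite hx2 /d2; field; lra.
Qed.

Lemma detE (x y z : pt) : orient_det x y z =
  (y.1 - x.1) * (z.2 - x.2) - (y.2 - x.2) * (z.1 - x.1).
Proof. by rewrite /orient_det !RminusE !RmultE. Qed.

Lemma det_affine (x0 x1 y z : pt) (t : R) :
  orient_det (t * x1.1 + (1 - t) * x0.1, t * x1.2 + (1 - t) * x0.2) y z =
  t * orient_det x1 y z + (1 - t) * orient_det x0 y z.
Proof. rewrite !detE /=; ring. Qed.

Lemma move1 (X Y Z : set pt) (x0 x1 y z : pt) :
  convex_set X -> convex_set Y -> convex_set Z ->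
  (forall w, X w -> Y w -> Z w -> False) ->
  Y x0 -> Z x0 -> Y x1 -> Z x1 -> X y -> Z y -> X z -> Y z ->
  ccw x0 y z -> ccw x1 y z.
Proof.
move=> cX cY cZ hE Yx0 Zx0 Yx1 Zx1 Xy Zy Xz Yz; rewrite /ccw => h0.
case: (ltrP 0 (orient_det x1 y z)) => // h1; exfalso.
set f0 := orient_det x0 y z in h0; set f1 := orient_det x1 y z in h1.
pose t := f0 / (f0 - f1).
have t0 : 0 <= t by apply: divr_ge0; lra.
have t1 : t <= 1 by rewrite /t ler_pdivrMr; lra.
pose xt : pt := (t * x1.1 + (1 - t) * x0.1, t * x1.2 + (1 - t) * x0.2).
have Yxt : Y xt by exact: cY.
have Zxt : Z xt by exact: cZ.
have d0 : orient_det xt y z = 0.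
  rewrite /xt det_affine -/f0 -/f1 /t; field; lra.
have [w [Xw [Yw Zw]]] := @collinear_mem X Y Z xt y z cX cY cZ Yxt Zxt Xy Zy Xz Yz d0.
exact: (hE w).
Qed.

Lemma det_cyc (x y z : pt) : orient_det x y z = orient_det y z x.
Proof. rewrite !detE; ring. Qed.

Lemma det_swap (x y z : pt) : orient_det y x z = - orient_det x y z.
Proof. rewrite !detE; ring. Qed.

Lemma const_or (X Y Z : set pt) (x0 y0 z0 x y z : pt) :
  convex_set X -> convex_set Y -> convex_set Z ->
  (forall w, X w -> Y w -> Z w -> False) ->
  Y x0 -> Z x0 -> X y0 -> Z y0 -> X z0 -> Y z0 ->
  Y x -> Z x -> X y -> Z y -> X z -> Y z ->
  ccw x0 y0 z0 -> ccw x y z.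
Proof.
move=> cX cY cZ hE Yx0 Zx0 Xy0 Zy0 Xz0 Yz0 Yx Zx Xy Zy Xz Yz h.
have h1 : ccw x y0 z0 by apply: (@move1 X Y Z x0 x y0 z0 cX cY cZ hE Yx0 Zx0).
have h2 : ccw y z0 x.
  apply: (@move1 Y Z X y0 y z0 x) => //.
    by move=> w Yw Zw Xw; exact: (hE w).
  by move: h1; rewrite /ccw det_cyc.
have h3 : ccw z x y.
  apply: (@move1 Z X Y z0 z x y) => //.
    by move=> w Zw Xw Yw; exact: (hE w).
  by move: h2; rewrite /ccw det_cyc.
by move: h3; rewrite /ccw det_cyc.
Qed.

Lemma center (Dset : set pt) (q x b y : pt) :
  convex_set Dset -> Dset x -> Dset b -> Dset y -> ~ Dset q ->
  ccw q x b -> ccw q b y -> ccw q x y.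
Proof.
move=> cD Dx Db Dy nDq; rewrite /ccw => hg ha.
case: (ltrP 0 (orient_det q x y)) => // hb; exfalso; apply: nDq.
move: ha hb hg; rewrite !detE.
case: q => q1 q2; case: x Dx => x1 x2 Dx; case: b Db => b1 b2 Db;
case: y Dy => y1 y2 Dy /= ha hb hg.
set al := (b1 - q1) * (y2 - q2) - (b2 - q2) * (y1 - q1) in ha.
set be := - ((x1 - q1) * (y2 - q2) - (x2 - q2) * (y1 - q1)).
have hbe : 0 <= be by rewrite /be; lra.
set ga := (x1 - q1) * (b2 - q2) - (x2 - q2) * (b1 - q1) in hg.
pose t' := al / (al + be).
pose u : pt := (t' * x1 + (1 - t') * b1, t' * x2 + (1 - t') * b2).
have Du : Dset u.
  apply: (@conv_mem _ (x1, x2) (b1, b2) t') => //=.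
  - apply: divr_ge0; lra.
  - rewrite /t' ler_pdivrMr; lra.
pose t := (al + be) / (al + be + ga).
apply: (@conv_mem _ u (y1, y2) t) => //=.
- apply: divr_ge0; lra.
- rewrite /t ler_pdivrMr; lra.
- rewrite /t /t' /al /be /ga; field.
  rewrite -/al -/be -/ga.
  by apply/andP; split; rewrite gt_eqF //; lra.
- rewrite /t /t' /al /be /ga; field.
  rewrite -/al -/be -/ga.
  by apply/andP; split; rewrite gt_eqF //; lra.
Qed.

Lemma quad (I : finType) (S : I -> set pt)
  (S43 : forall a b c e : I, uniq [:: a; b; c; e] ->
     exists i j k : I, uniq [:: i; j; k] /\
       [/\ i \in [:: a; b; c; e], j \in [:: a; b; c; e] & k \in [:: a; b; c; e]] /\
       S i `&` S j `&` S k !=set0)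
  (w x y z : I) : uniq [:: w; x; y; z] ->
  exists p, (S w p /\ S x p /\ S y p) \/ (S w p /\ S x p /\ S z p) \/
            (S w p /\ S y p /\ S z p) \/ (S x p /\ S y p /\ S z p).
Proof.
move=> /S43 [i [j [k [hu [[hi hj hk] [p [[Si Sj] Sk]]]]]]].
exists p; move: hi hj hk hu Si Sj Sk; rewrite !inE.
by move=> /or4P[]/eqP-> /or4P[]/eqP-> /or4P[]/eqP-> hu Si Sj Sk;
  first [tauto | move: hu; rewrite /= !inE !eqxx ?orbT ?andbF].
Qed.

Ltac split_ands :=
  repeat match goal with
  | H : is_true (_ && _) |- _ =>
      let H1 := fresh "H" in let H2 := fresh "H" in case/andP: H => H1 H2
  end.

Lemma uniq_test (I : finType) (D a b c e : I) : uniq [:: D; a; b; c; e] ->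
  [/\ uniq [:: a; b; c; D], uniq [:: c; e; a; D], uniq [:: b; c; e; D],
      uniq [:: e; a; b; D] & uniq [:: a; b; c; e]].
Proof.
rewrite /= !inE !negb_or => H; split_ands.
split; rewrite /= ?inE ?negb_or ?andbT; repeat (apply/andP; split);
  first [assumption | rewrite eq_sym; assumption].
Qed.

Lemma o_empty (X Y Z : set pt) : o_pos X Y Z -> forall w, X w -> Y w -> Z w -> False.
Proof.
case=> h _ w Xw Yw Zw.
have : (X `&` Y `&` Z) w by [].
by rewrite h.
Qed.

Lemma indep (X Y Z : set pt) (x y z : pt) :
  convex_set X -> convex_set Y -> convex_set Z -> o_pos X Y Z ->
  Y x -> Z x -> X y -> Z y -> X z -> Y z -> ccw x y z.
Proof.
move=> cX cY cZ ho Yx Zx Xy Zy Xz Yz.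
have hE := @o_empty X Y Z ho.
case: ho => _ [x0 [y0 [z0 [[Yx0 Zx0] [[Xy0 Zy0] [[Xz0 Yz0] h]]]]]].
exact: (@const_or X Y Z x0 y0 z0 x y z).
Qed.

Lemma trans_pt (A B C Dd : set pt) (q x y : pt) :
  convex_set A -> convex_set B -> convex_set C -> convex_set Dd ->
  o_pos A B Dd -> o_pos B C Dd -> B `&` Dd !=set0 ->
  A q -> B q -> C q -> C x -> Dd x -> A y -> Dd y -> ccw x y q.
Proof.
move=> cA cB cC cD hAB hBC [b [Bb Db]] Aq Bq Cq Cx Dx Ay Dy.
have nDq : ~ Dd q by move=> Dq; exact: (@o_empty A B Dd hAB q Aq Bq Dq).
have h1 : ccw b y q by exact: (@indep A B Dd b y q).
have h2 : ccw x b q by exact: (@indep B C Dd x b q).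
have := @center Dd q x b y cD Dx Db Dy nDq.
rewrite /ccw [orient_det q x b]det_cyc [orient_det q b y]det_cyc
  [orient_det q x y]det_cyc.
by apply.
Qed.

Lemma stepA (A B C E Dd : set pt) :
  convex_set A -> convex_set B -> convex_set C -> convex_set E -> convex_set Dd ->
  o_pos A B Dd -> o_pos B C Dd -> o_pos C E Dd -> o_pos E A Dd ->
  B `&` Dd !=set0 -> E `&` Dd !=set0 -> C `&` Dd !=set0 -> A `&` Dd !=set0 ->
  (exists p, (A p /\ B p /\ C p) \/ (A p /\ B p /\ Dd p) \/
            (A p /\ C p /\ Dd p) \/ (B p /\ C p /\ Dd p)) ->
  (exists p, (C p /\ E p /\ A p) \/ (C p /\ E p /\ Dd p) \/
            (C p /\ A p /\ Dd p) \/ (E p /\ A p /\ Dd p)) ->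
  exists p, A p /\ C p /\ Dd p.
Proof.
move=> cA cB cC cE cD hAB hBC hCE hEA nBD nED [x [Cx Dx]] [y [Ay Dy]] Q1 Q2.
case: (pselect (exists p, A p /\ C p /\ Dd p)) => // hn; exfalso.
have hE : forall w, A w -> C w -> Dd w -> False.
  by move=> w Aw Cw Dw; apply: hn; exists w.
have [q [Aq [Bq Cq]]] : exists q, A q /\ B q /\ C q.
  case: Q1 => p [|[|[]]].
  - by move=> h; exists p.
  - by case=> Ap [Bp Dp]; case: (@o_empty _ _ _ hAB p Ap Bp Dp).
  - by case=> Ap [Cp Dp]; case: (hE p Ap Cp Dp).
  - by case=> Bp [Cp Dp]; case: (@o_empty _ _ _ hBC p Bp Cp Dp).
have [q' [Cq' [Eq' Aq']]] : exists q, C q /\ E q /\ A q.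
  case: Q2 => p [|[|[]]].
  - by move=> h; exists p.
  - by case=> Cp [Ep Dp]; case: (@o_empty _ _ _ hCE p Cp Ep Dp).
  - by case=> Cp [Ap Dp]; case: (hE p Ap Cp Dp).
  - by case=> Ep [Ap Dp]; case: (@o_empty _ _ _ hEA p Ep Ap Dp).
have h1 : ccw x y q by exact: (@trans_pt A B C Dd q x y).
have h2 : ccw y x q' by exact: (@trans_pt C E A Dd q' y x).
have h3 : ccw x y q' by apply: (@const_or A C Dd x y q x y q' cA cC cD hE).
by move: h2 h3; rewrite /ccw det_swap; lra.
Qed.

Lemma stepC (A B C Dd : set pt) (p : pt) :
  convex_set A -> convex_set B -> convex_set C -> convex_set Dd ->
  o_pos A B Dd -> o_pos B C Dd -> B `&` Dd !=set0 ->
  A p -> C p -> Dd p -> forall q, A q -> B q -> C q -> False.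
Proof.
move=> cA cB cC cD hAB hBC [m [Bm Dm]] Ap Cp Dp q Aq Bq Cq.
have h1 : ccw m p q by exact: (@indep A B Dd m p q).
have h2 : ccw p m q by exact: (@indep B C Dd p m q).
by move: h1 h2; rewrite /ccw det_swap; lra.
Qed.

Theorem claim8 (I : finType) (S : I -> set pt)
  (Sinj : injective S)
  (Scompact : forall i, compact (S i))
  (Sconvex : forall i, convex_set (S i))
  (Spair : forall i j, S i `&` S j !=set0)
  (S43 : forall a b c e : I, uniq [:: a; b; c; e] ->
     exists i j k : I, uniq [:: i; j; k] /\
       [/\ i \in [:: a; b; c; e], j \in [:: a; b; c; e] & k \in [:: a; b; c; e]] /\
       S i `&` S j `&` S k !=set0)
  (D : I) :
  ~ (exists a b c e : I, uniq [:: D; a; b; c; e] /\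
       o_pos (S a) (S b) (S D) /\ o_pos (S b) (S c) (S D) /\
       o_pos (S c) (S e) (S D) /\ o_pos (S e) (S a) (S D)).
Proof.
case=> a [b [c [e [hu [hab [hbc [hce hea]]]]]]].
have [u1 u2 u3 u4 u5] := @uniq_test I D a b c e hu.
have Q1 := @quad I S S43 _ _ _ _ u1; have Q2 := @quad I S S43 _ _ _ _ u2; have Q3 := @quad I S S43 _ _ _ _ u3.
have Q4 := @quad I S S43 _ _ _ _ u4; have [p Q5] := @quad I S S43 _ _ _ _ u5.
have cv := Sconvex.
have [p1 [Ap1 [Cp1 Dp1]]] :=
  @stepA (S a) (S b) (S c) (S e) (S D) (cv a) (cv b) (cv c) (cv e) (cv D)
    hab hbc hce hea (Spair b D) (Spair e D) (Spair c D) (Spair a D) Q1 Q2.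
have [p2 [Bp2 [Ep2 Dp2]]] :=
  @stepA (S b) (S c) (S e) (S a) (S D) (cv b) (cv c) (cv e) (cv a) (cv D)
    hbc hce hea hab (Spair c D) (Spair a D) (Spair e D) (Spair b D) Q3 Q4.
have n1 := @stepC (S a) (S b) (S c) (S D) p1 (cv a) (cv b) (cv c) (cv D)
  hab hbc (Spair b D) Ap1 Cp1 Dp1 p.
have n2 := @stepC (S b) (S c) (S e) (S D) p2 (cv b) (cv c) (cv e) (cv D)
  hbc hce (Spair c D) Bp2 Ep2 Dp2 p.
have n3 := @stepC (S c) (S e) (S a) (S D) p1 (cv c) (cv e) (cv a) (cv D)
  hce hea (Spair e D) Cp1 Ap1 Dp1 p.
have n4 := @stepC (S e) (S a) (S b) (S D) p2 (cv e) (cv a) (cv b) (cv D)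
  hea hab (Spair a D) Ep2 Bp2 Dp2 p.
case: Q5 => [[Ap [Bp Cp]]|[[Ap [Bp Ep]]|[[Ap [Cp Ep]]|[Bp [Cp Ep]]]]].
- exact: n1.
- exact: n4.
- exact: n3.
- exact: n2.
Qed.
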